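(* Let $G$ be a multi-graph with a vertex cut $S$ of size $3$. Let $V_1,V_2$ be a partition of $V(G)\setminus S$ such that $V_1$ and $V_2$ are non-empty, there are no edges between $V_1$ and $V_2$ in $G$, $|V_1|$ is odd and $|V_2|$ is even. Then there exists a graph $G'$ such that $|V(G')|\leq |V_1|+3\leq |V(G)|-2$ and $\mu(G')\geq \mu(G)$.
   Context: Multi-graphs have no self-loops; the skeleton of a multi-graph is its underlying simple graph. Each edge $e$ between $u$ and $v$ consists of two half-edges $e_u$ and $e_v$. A half-edge colouring is a function $c$ from the set of half-edges to $\mathbb{N}_0$; each edge $e$ also gets a weight $w(e)\in\mathbb{C}$. The weight of a perfect matching $P$ is $\prod_{e\in P}w(e)$. A vertex colouring is a map $vc:V\to\mathbb{N}_0$; it filters out the subgraph consisting of all edges $e$ (between $u,v$) with $c(e_u)=vc(u)$ and $c(e_v)=vc(v)$ (with the same weights). The weight of $vc$ is the sum of the weights of all perfect matchings of this filtered subgraph; $vc$ is feasible if the filtered subgraph has at least one perfect matching (an infeasible colouring has weight $0$). An edge-coloured edge-weighted multi-graph is GHZ if every feasible monochromatic vertex colouring has weight $1$ and every non-monochromatic vertex colouring has weight $0$; its dimension is the number of feasible monochromatic vertex colourings. For a graph $G$, the matching index $\mu(G)$ is the maximum (possibly $\infty$) of the dimension over all GHZ edge-coloured edge-weighted multi-graphs whose skeleton is (the skeleton of) $G$. *)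

(* Defs.v *)
From HB Require Import structures.
From mathcomp Require Import all_boot all_order all_algebra.
From mathcomp Require Import complex.
From mathcomp Require Import Rstruct.
Set Implicit Arguments.
Unset Strict Implicit.
Unset Printing Implicit Defensive.
Import Order.TTheory GRing.Theory Num.Theory.
Local Open Scope ring_scope.

Definition CC : Type := complex Rdefinitions.R.

Definition simple_graph (V : finType) (g : rel V) : Prop :=
  (forall u v, g u v = g v u) /\ (forall v, ~~ g v v).

Definition vertex_cut (V : finType) (g : rel V) (S : {set V}) : Prop :=
  exists x y : V, [/\ x \notin S, y \notin S &
    ~~ connect [rel a b | [&& g a b, a \notin S & b \notin S]] x y].

(* Edges are indexed by 'I_mE; edge i joins msrc i and mdst i.
   Parallel edges are allowed (distinct indices). *)
Record mgraph (V : finType) := MGraph {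
  mE : nat;
  msrc : 'I_mE -> V;
  mdst : 'I_mE -> V }.
Arguments mE {V} _.
Arguments msrc {V} _ _.
Arguments mdst {V} _ _.

Definition mloopless (V : finType) (G : mgraph V) : Prop :=
  forall i, msrc G i != mdst G i.

Definition mskeleton (V : finType) (G : mgraph V) : rel V :=
  [rel u v | [exists i : 'I_(mE G),
     ((msrc G i == u) && (mdst G i == v)) || ((msrc G i == v) && (mdst G i == u))]].

(* Edge i joins src i and dst i; its half-edge at src i has colour csrc i,
   its half-edge at dst i has colour cdst i; its weight is wgt i. *)
Record ecgraph (V : finType) := ECGraph {
  nE : nat;
  src : 'I_nE -> V;
  dst : 'I_nE -> V;
  csrc : 'I_nE -> nat;
  cdst : 'I_nE -> nat;
  wgt : 'I_nE -> CC }.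
Arguments nE {V} _.
Arguments src {V} _ _.
Arguments dst {V} _ _.
Arguments csrc {V} _ _.
Arguments cdst {V} _ _.
Arguments wgt {V} _ _.

Section ECGraphDefs.
Variables (V : finType) (M : ecgraph V).

Definition ecloopless : Prop := forall i, src M i != dst M i.

Definition ecskeleton : rel V :=
  [rel u v | [exists i : 'I_(nE M),
     ((src M i == u) && (dst M i == v)) || ((src M i == v) && (dst M i == u))]].

Definition filtered (vc : V -> nat) (i : 'I_(nE M)) : bool :=
  (csrc M i == vc (src M i)) && (cdst M i == vc (dst M i)).

Definition is_pm (vc : V -> nat) (P : {set 'I_(nE M)}) : bool :=
  [forall i in P, filtered vc i] &&
  [forall x : V, #|[set i in P | (src M i == x) || (dst M i == x)]| == 1%N].

Definition vc_weight (vc : V -> nat) : CC :=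
  \sum_(P : {set 'I_(nE M)} | is_pm vc P) \prod_(i in P) wgt M i.

Definition feasible (vc : V -> nat) : Prop := exists P, is_pm vc P.

Definition monochromatic (vc : V -> nat) : Prop := forall u v, vc u = vc v.

Definition GHZ : Prop :=
  forall vc : V -> nat,
    (monochromatic vc -> feasible vc -> vc_weight vc = 1) /\
    (~ monochromatic vc -> vc_weight vc = 0).

Definition dim_ge (n : nat) : Prop :=
  exists f : 'I_n -> V -> nat,
    (forall k, monochromatic (f k) /\ feasible (f k)) /\
    (forall k l, k != l -> exists v, f k v <> f l v).

End ECGraphDefs.

Definition mu_ge (V : finType) (g : rel V) (n : nat) : Prop :=
  exists M : ecgraph V,
    [/\ ecloopless M, ecskeleton M =2 g, GHZ M & dim_ge M n].

(* mu(g) <= mu(g')  (comparison in N u {oo}) *)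
Definition mu_le (V V' : finType) (g : rel V) (g' : rel V') : Prop :=
  forall n, mu_ge g n -> mu_ge g' n.

(* Main.v *)
Require Import Defs.
From HB Require Import structures.
From mathcomp Require Import all_boot all_order all_algebra.
From mathcomp Require Import complex Rstruct ring zify.
From Stdlib Require Import Classical.
Set Implicit Arguments.
Unset Strict Implicit.
Unset Printing Implicit Defensive.
Import Order.TTheory GRing.Theory Num.Theory.
Section Frame.
Variable V : finType.

Record eg := EG { Et : finType; es : Et -> V; et : Et -> V;
                  ecs : Et -> nat; ect : Et -> nat; ew : Et -> CC }.

Definition touch (g : eg) (i : Et g) (x : V) : bool := (es i == x) || (et i == x).
Definition filt (g : eg) (vc : V -> nat) (i : Et g) : bool :=
  (ecs i == vc (es i)) && (ect i == vc (et i)).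
Definition cov (g : eg) (P : {set Et g}) (x : V) : nat := #|[set i in P | touch i x]|.
Definition pmU (g : eg) (vc : V -> nat) (U : {set V}) (P : {set Et g}) : bool :=
  [forall i in P, filt vc i] && [forall x, cov P x == (x \in U)].
Definition W (g : eg) (A : {set Et g}) (vc : V -> nat) (U : {set V}) : CC :=
  (\sum_(P : {set Et g} | (P \subset A) && pmU vc U P) \prod_(i in P) ew i)%R.
Definition loopfree (g : eg) (A : {set Et g}) := forall i, i \in A -> es i != et i.

Variable g : eg.
Implicit Types (A P : {set Et g}) (U : {set V}) (vc : V -> nat) (i j : Et g) (x y z : V).

Lemma touch_s i : touch i (es i). Proof. by rewrite /touch eqxx. Qed.
Lemma touch_t i : touch i (et i). Proof. by rewrite /touch eqxx orbT. Qed.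

Lemma cov_sum P x : cov P x = \sum_(i in P) @touch g i x.
Proof.
rewrite /cov -sum1_card (eq_bigl (fun i => (i \in P) && touch i x)); last first.
  by move=> i; rewrite inE.
by rewrite big_mkcondr /=; apply: eq_bigr => i _; case: (touch i x).
Qed.

Lemma cov_set1 i x : cov [set i] x = touch i x.
Proof. by rewrite cov_sum big_set1. Qed.

Lemma cov_touch P U x i : [forall x, cov P x == (x \in U)] -> i \in P -> touch i x -> x \in U.
Proof.
move=> /forallP /(_ x) /eqP H iP tx.
have : 0 < cov P x by apply/card_gt0P; exists i; rewrite inE iP tx.
by rewrite H; case: (x \in U).
Qed.

Lemma pm_touch vc U P i x : pmU vc U P -> i \in P -> touch i x -> x \in U.
Proof. by case/andP=> _; apply: cov_touch. Qed.

Lemma pm_filt vc U P i : pmU vc U P -> i \in P -> filt vc i.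
Proof. by case/andP=> /forall_inP H _; apply: H. Qed.

Lemma pm_cov vc U P x : pmU vc U P -> cov P x = (x \in U).
Proof. by case/andP=> _ /forallP /(_ x) /eqP. Qed.

Lemma pm_ex vc U P x : pmU vc U P -> x \in U -> exists2 i, i \in P & touch i x.
Proof.
move=> pm xU; have : 0 < cov P x by rewrite (pm_cov x pm) xU.
by case/card_gt0P=> i; rewrite inE => /andP[]; exists i.
Qed.

Lemma W_set0 A vc : W A vc set0 = 1%R.
Proof.
rewrite /W (big_pred1 set0) ?big_set0 // => P /=.
apply/idP/idP.
  case/andP=> _ pm; apply/eqP/setP=> i; rewrite inE; apply/negP=> iP.
  by have := pm_touch pm iP (touch_s i); rewrite inE.
move/eqP->; rewrite sub0set /= /pmU; apply/andP; split.
  by apply/forall_inP=> i; rewrite inE.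
apply/forallP=> x; rewrite inE cov_sum big_set0 //.
Qed.

Lemma W_uncov A vc U x : x \in U ->
  (forall i, i \in A -> filt vc i -> ~~ touch i x) -> W A vc U = 0%R.
Proof.
move=> xU H; rewrite /W big_pred0 // => P; apply/negP=> /andP[sPA pm].
case: (pm_ex pm xU) => i iP ti.
by move: (H i (subsetP sPA i iP) (pm_filt pm iP)); rewrite ti.
Qed.

Lemma sum_eqx (y : V) : \sum_x (y == x) = 1.
Proof.
rewrite (bigD1 y) //= eqxx big1 // => x; rewrite eq_sym => /negPf -> //.
Qed.

Lemma pm_card A vc U P : loopfree A -> P \subset A -> pmU vc U P -> #|U| = (#|P|).*2.
Proof.
move=> lf sPA pm.
have -> : #|U| = \sum_x cov P x.
  rewrite -sum1_card big_mkcond /=; apply: eq_bigr => x _.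
  by rewrite (pm_cov x pm); case: (x \in U).
rewrite (eq_bigr (fun x => \sum_(i in P) @touch g i x)); last by move=> x _; rewrite cov_sum.
rewrite exchange_big /= -muln2 -sum_nat_const; apply: eq_bigr => i iP.
have ne := lf i (subsetP sPA i iP).
rewrite (eq_bigr (fun x => (es i == x) + (et i == x))); last first.
  move=> x _; rewrite /touch; case: eqP => [<-|]; last by case: eqP.
  by rewrite eq_sym (negPf ne).
by rewrite big_split /= !sum_eqx.
Qed.

Lemma W_odd A vc U : loopfree A -> odd #|U| -> W A vc U = 0%R.
Proof.
move=> lf oU; rewrite /W big_pred0 // => P; apply/negP=> /andP[sPA pm].
by move: oU; rewrite (pm_card lf sPA pm) odd_double.
Qed.

Lemma W_loc A vc1 vc2 U : {in U, vc1 =1 vc2} -> W A vc1 U = W A vc2 U.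
Proof.
move=> H; apply: eq_bigl => P; congr (_ && _); rewrite /pmU.
case Hc: [forall x, cov P x == (x \in U)]; rewrite ?andbF ?andbT //.
apply: eq_forallb_in => i iP; rewrite /filt.
rewrite !H //; [apply: (cov_touch Hc iP (touch_t i))| apply: (cov_touch Hc iP (touch_s i))].
Qed.

Lemma W_pair A vc x y : loopfree A -> x != y ->
  W A vc [set x; y] =
  (\sum_(i in A | filt vc i && ([set es i; et i] == [set x; y])) ew i)%R.
Proof.
move=> lf nxy.
pose C := [set i in A | filt vc i && ([set es i; et i] == [set x; y])].
rewrite (eq_bigl (fun i => i \in C)); last by move=> i; rewrite inE.
rewrite /W (eq_bigl (fun P => P \in [set [set i] | i in C])); last first.
  move=> P /=; apply/idP/idP.
    case/andP=> sPA pm.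
    have : #|P| = 1.
      have := pm_card lf sPA pm; rewrite cards2 nxy.
      by case: #|P| => [|[|n]] //= [].
    move/eqP/cards1P=> [i Pi]; subst P.
    apply/imsetP; exists i => //.
    have iA : i \in A by apply: (subsetP sPA); rewrite inE.
    have i1 : i \in [set i] by rewrite inE.
    rewrite inE iA (pm_filt pm i1) /= eqEcard cards2 cards2 nxy (lf i iA) andbT.
    apply/subsetP=> z; rewrite !inE => /orP[]/eqP->.
      by have := pm_touch pm i1 (touch_s i); rewrite !inE.
    by have := pm_touch pm i1 (touch_t i); rewrite !inE.
  case/imsetP=> i; rewrite inE => /andP[iA /andP[fi /eqP E]] ->.
  rewrite sub1set iA /= /pmU; apply/andP; split.
    by apply/forall_inP=> j; rewrite inE => /eqP->.
  apply/forallP=> z; rewrite cov_set1 -E !inE /touch.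
  by rewrite ![_ == z]eq_sym.
rewrite big_imset /=; last by move=> i j _ _; apply: set1_inj.
by apply: eq_bigr => i _; rewrite big_set1.
Qed.

End Frame.
Section Frame2.
Variable V : finType.
Variable g : eg V.
Implicit Types (A B P : {set Et g}) (U : {set V}) (vc : V -> nat) (i j : Et g) (x y z : V).

Lemma cov_U P1 P2 x : [disjoint P1 & P2] -> cov (P1 :|: P2) x = cov P1 x + cov P2 x.
Proof.
move=> d; rewrite !cov_sum (eq_bigl [predU P1 & P2]); first by rewrite bigU.
by move=> i; rewrite !inE.
Qed.

Lemma cov_sub P1 P2 x : P1 \subset P2 -> cov P1 x <= cov P2 x.
Proof.
move=> s; apply: subset_leq_card; apply/subsetP=> i; rewrite !inE => /andP[/(subsetP s) -> ->].
by [].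
Qed.

Lemma cov1_uniq P x i j : cov P x = 1 -> i \in P -> j \in P -> touch i x -> touch j x -> i = j.
Proof.
rewrite /cov => /eqP/cards1P[k E] iP jP ti tj.
have : i \in [set i in P | touch i x] by rewrite inE iP ti.
have : j \in [set i in P | touch i x] by rewrite inE jP tj.
by rewrite E !inE => /eqP-> /eqP->.
Qed.

Lemma W_zero A B vc U : A \subset B -> (forall i, i \in B -> i \notin A -> ew i = 0%R) ->
  W B vc U = W A vc U.
Proof.
move=> sAB Hz; rewrite /W [LHS]big_mkcond [RHS]big_mkcond /=; apply: eq_bigr => P _.
case pm: (pmU vc U P); rewrite ?andbF ?andbT //.
case: (boolP (P \subset A)) => sPA; first by rewrite (subset_trans sPA sAB).
case: ifP => // sPB; case/subsetPn: sPA => i iP niA.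
by rewrite (bigD1 i) //= Hz ?mul0r //; apply: (subsetP sPB).
Qed.

Lemma W_split A1 A2 vc U : [disjoint A1 & A2] ->
  W (A1 :|: A2) vc U =
  (\sum_(U1 : {set V} | U1 \subset U) W A1 vc U1 * W A2 vc (U :\: U1))%R.
Proof.
move=> dA.
have dP : forall P1 P2, P1 \subset A1 -> P2 \subset A2 -> [disjoint P1 & P2].
  move=> P1 P2 s1 s2; apply: disjointWl s1 _; apply: disjointWr s2 _; exact: dA.
rewrite (eq_bigr (fun U1 => \sum_(P1 : {set Et g} | (P1 \subset A1) && pmU vc U1 P1)
   \sum_(P2 : {set Et g} | (P2 \subset A2) && pmU vc (U :\: U1) P2)
   (\prod_(i in P1) ew i * \prod_(i in P2) ew i))%R); last first.
  by move=> U1 _; rewrite /W big_distrlr.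
rewrite pair_big_dep /= pair_big_dep /=.
set D := [set p : {set V} * {set Et g} * {set Et g} | (p.1.1 \subset U) &&
   ((p.1.2 \subset A1) && pmU vc p.1.1 p.1.2) &&
   ((p.2 \subset A2) && pmU vc (U :\: p.1.1) p.2)].
rewrite (eq_bigl (fun p => p \in D)); last by move=> p; rewrite inE.
rewrite (eq_bigr (fun p => \prod_(i in p.1.2 :|: p.2) ew i)%R); last first.
  move=> [[U1 P1] P2]; rewrite inE /= => /andP[/andP[_ /andP[s1 _]] /andP[s2 _]].
  have -> : (\prod_(i in P1 :|: P2) ew i = \prod_(i in [predU P1 & P2]) ew i)%R.
    by apply: eq_bigl => i; rewrite !inE.
  by rewrite bigU //; apply: dP.
have key : forall U1 P1, pmU vc U1 P1 -> forall x, (x \in U1) = (cov P1 x == 1).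
  by move=> U1 P1 pm x; rewrite (pm_cov x pm); case: (x \in U1).
rewrite -(big_imset (fun P : {set Et g} => \prod_(i in P) ew i)%R (h := fun p => p.1.2 :|: p.2) (A := mem D)) /=; last first.
  move=> [[U1 P1] P2] [[U1' P1'] P2']; rewrite !inE /=.
  move=> /andP[/andP[_ /andP[s1 pm1]] /andP[s2 _]] /andP[/andP[_ /andP[s1' pm1']] /andP[s2' _]] E.
  have I1 : forall Q1 Q2 : {set Et g}, Q1 \subset A1 -> Q2 \subset A2 -> (Q1 :|: Q2) :&: A1 = Q1.
    move=> Q1 Q2 q1 q2; apply/setP=> i; rewrite !inE.
    case: (boolP (i \in Q1)) => iQ1 /=; first by rewrite (subsetP q1).
    case: (boolP (i \in Q2)) => iQ2 //=.
    have := subsetP q2 i iQ2; move: dA; rewrite disjoints_subset => /subsetP H.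
    by move=> iA2; apply/negP=> iA1; have := H i iA1; rewrite inE iA2.
  have I2 : forall Q1 Q2 : {set Et g}, Q1 \subset A1 -> Q2 \subset A2 -> (Q1 :|: Q2) :&: A2 = Q2.
    move=> Q1 Q2 q1 q2; apply/setP=> i; rewrite !inE.
    case: (boolP (i \in Q2)) => iQ2 /=; first by rewrite orbT (subsetP q2).
    case: (boolP (i \in Q1)) => iQ1 //=.
    have := subsetP q1 i iQ1; move: dA; rewrite disjoints_subset => /subsetP H.
    by move=> iA1; have := H i iA1; rewrite inE => /negPf ->.
  have EP1 : P1 = P1' by rewrite -(I1 _ _ s1 s2) E I1.
  have EP2 : P2 = P2' by rewrite -(I2 _ _ s1 s2) E I2.
  subst P1' P2'; congr (_, _, _); apply/setP=> x.
  by rewrite (key _ _ pm1) (key _ _ pm1').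
rewrite /W; apply: eq_bigl => P; apply/idP/idP.
  case/andP=> sPA pm.
  pose U1 := [set x | cov (P :&: A1) x == 1].
  apply/imsetP; exists (U1, P :&: A1, P :&: A2); last first.
    by rewrite /= -setIUr; apply/esym/setIidPl.
  have cP : forall x, cov (P :&: A1) x + cov (P :&: A2) x = (x \in U).
    move=> x; rewrite -cov_U; last first.
      by apply: dP; [exact: subsetIr | exact: subsetIr].
    by rewrite -setIUr (setIidPl sPA) (pm_cov x pm).
  have fP : forall A', [forall i in P :&: A', filt vc i].
    move=> A'; apply/forall_inP=> i; rewrite inE => /andP[iP _]; exact: pm_filt pm iP.
  rewrite inE /=; apply/andP; split; [apply/andP; split|].
  - apply/subsetP=> x; rewrite inE => /eqP c1; have := cP x; rewrite c1.
    by case: (x \in U).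
  - rewrite subsetIr /= /pmU fP /=; apply/forallP=> x; rewrite inE.
    by have := cP x; case: (cov (P :&: A1) x) => [|[|n]] //=; case: (x \in U).
  - rewrite subsetIr /= /pmU fP /=; apply/forallP=> x; rewrite !inE.
    have := cP x; case: (cov (P :&: A1) x) => [|[|n]] //=;
      case: (x \in U); case: (cov (P :&: A2) x) => [|[|m]] //.
case/imsetP=> [[[U1 P1] P2]]; rewrite inE /= => /andP[/andP[sU /andP[s1 pm1]] /andP[s2 pm2]] ->.
rewrite (setUSS s1 s2) /= /pmU; apply/andP; split.
  apply/forall_inP=> i; rewrite inE => /orP[] iP; [exact: pm_filt pm1 iP | exact: pm_filt pm2 iP].
apply/forallP=> x; rewrite cov_U; last by apply: dP.
rewrite (pm_cov x pm1) (pm_cov x pm2) !inE.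
case: (boolP (x \in U1)) => xU1 /=; last by case: (x \in U).
by rewrite (subsetP sU x xU1).
Qed.

Lemma W_star A vc U v0 : loopfree A -> (forall i, i \in A -> touch i v0) -> 2 < #|U| ->
  W A vc U = 0%R.
Proof.
move=> lf Ht cU; rewrite /W big_pred0 // => P; apply/negP=> /andP[sPA pm].
have : #|P| <= 1.
  have -> : #|P| = cov P v0.
    rewrite /cov; apply: eq_card => i; rewrite inE.
    case: (boolP (i \in P)) => //= iP; rewrite Ht //; exact: (subsetP sPA).
  by rewrite (pm_cov v0 pm); case: (v0 \in U).
by move: cU; rewrite (pm_card lf sPA pm); case: #|P| => [|[|n]].
Qed.

Section Scale.
Variables (v0 : V) (Cf : pred nat) (kap : nat -> CC).
Definition fac i := if es i == v0 then kap (ecs i) else if et i == v0 then kap (ect i) else 1%R.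
Definition okv i := (if es i == v0 then Cf (ecs i) else true) &&
                    (if et i == v0 then Cf (ect i) else true).
Definition gsc := EG (@es _ g) (@et _ g) (@ecs _ g) (@ect _ g) (fun i => fac i * ew i)%R.

Lemma fac_notouch i : ~~ touch i v0 -> fac i = 1%R.
Proof. by rewrite /touch /fac negb_or => /andP[/negPf-> /negPf->]. Qed.
Lemma okv_notouch i : ~~ touch i v0 -> okv i.
Proof. by rewrite /touch /okv negb_or => /andP[/negPf-> /negPf->]. Qed.
Lemma fac_touch vc i : filt vc i -> touch i v0 -> fac i = kap (vc v0).
Proof.
rewrite /filt /touch /fac => /andP[/eqP-> /eqP->].
by case: eqP => [->|_] //= /eqP ->; rewrite eqxx.
Qed.
Lemma okv_touch vc i : filt vc i -> touch i v0 -> okv i = Cf (vc v0).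
Proof.
rewrite /filt /touch /okv => /andP[/eqP-> /eqP->].
case: eqP => [->|_] //=; last by move=> /eqP ->; rewrite eqxx.
by case: eqP => [->|]; rewrite ?andbb ?andbT.
Qed.

Lemma W_scale A vc U : v0 \in U ->
  W (g:=gsc) [set i in A | okv i] vc U =
  ((if Cf (vc v0) then kap (vc v0) else 0) * W (g:=g) A vc U)%R.
Proof.
move=> vU; rewrite /W mulr_sumr [LHS]big_mkcond [RHS]big_mkcond /=; apply: eq_bigr => P _.
case pm: (pmU vc U P); rewrite ?andbF ?andbT ?mulr0; last first.
  by move: pm; rewrite /pmU /= => ->; rewrite andbF.
have pm' : pmU (g:=gsc) vc U P by exact: pm.
rewrite pm' andbT.
case: (pm_ex pm vU) => i0 i0P ti0.
have c1 : cov P v0 = 1 by rewrite (pm_cov v0 pm) vU.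
have oth : forall j, j \in P -> j != i0 -> ~~ touch j v0.
  move=> j jP nj; apply/negP=> tj; move/eqP: nj; apply.
  exact: (cov1_uniq c1 jP i0P tj ti0).
have Ef : (\prod_(i in P) fac i = kap (vc v0))%R.
  rewrite (bigD1 i0) //= (fac_touch (pm_filt pm i0P) ti0) big1 ?mulr1 //.
  by move=> j /andP[jP nj]; apply: fac_notouch; apply: oth.
have Eo : (P \subset [set i in A | okv i]) = (P \subset A) && Cf (vc v0).
  apply/idP/idP.
    move=> s; apply/andP; split.
      by apply/subsetP=> i iP; have := subsetP s i iP; rewrite inE => /andP[].
    have := subsetP s i0 i0P; rewrite inE => /andP[_].
    by rewrite (okv_touch (pm_filt pm i0P) ti0).
  case/andP=> s cf; apply/subsetP=> i iP; rewrite inE (subsetP s i iP) /=.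
  case: (eqVneq i i0) => [->|ni]; first by rewrite (okv_touch (pm_filt pm i0P) ti0).
  by apply: okv_notouch; apply: oth.
rewrite Eo big_split /= Ef.
by case: (P \subset A); case: (Cf (vc v0)); rewrite /= ?mul0r ?mulr0.
Qed.
End Scale.

End Frame2.
Section Transport.
Variables (V V' : finType) (g : eg V) (g' : eg V') (h : V' -> V) (phi : Et g' -> Et g).
Hypotheses (hI : injective h) (phiI : injective phi)
  (Hs : forall i, es (phi i) = h (es i)) (Ht : forall i, et (phi i) = h (et i))
  (Hcs : forall i, ecs (phi i) = ecs i) (Hct : forall i, ect (phi i) = ect i)
  (Hw : forall i, ew (phi i) = ew i).
Variables (vc : V -> nat) (vc' : V' -> nat).
Hypothesis Hvc : forall x, vc' x = vc (h x).

Lemma touch_tr i x : touch (phi i) (h x) = touch i x.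
Proof. by rewrite /touch Hs Ht !(inj_eq hI). Qed.

Lemma touch_tr0 i x : (forall x', h x' != x) -> touch (phi i) x = false.
Proof. by move=> H; rewrite /touch Hs Ht !(negPf (H _)). Qed.

Lemma cov_tr (P : {set Et g'}) x : cov (phi @: P) (h x) = cov P x.
Proof.
rewrite !cov_sum big_imset /=; last by move=> a b _ _; apply: phiI.
by apply: eq_bigr => i _; rewrite touch_tr.
Qed.

Lemma cov_tr0 (P : {set Et g'}) x : (forall x', h x' != x) -> cov (phi @: P) x = 0.
Proof.
move=> H; rewrite cov_sum big1 // => i /imsetP[j _ ->]; by rewrite touch_tr0.
Qed.

Lemma filt_tr i : filt vc (phi i) = filt vc' i.
Proof. by rewrite /filt Hs Ht Hcs Hct !Hvc. Qed.

Lemma pm_tr (U : {set V'}) (P : {set Et g'}) : pmU vc (h @: U) (phi @: P) = pmU vc' U P.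
Proof.
rewrite /pmU; congr (_ && _).
  apply/forall_inP/forall_inP => H i.
    by move=> iP; rewrite -filt_tr; apply: H; apply: imset_f.
  by case/imsetP=> j jP ->; rewrite filt_tr; apply: H.
apply/forallP/forallP => H x.
  by have := H (h x); rewrite cov_tr mem_imset.
case: (pickP (fun x' => h x' == x)) => [x' /eqP <- | none].
  by rewrite cov_tr mem_imset.
rewrite cov_tr0; last by move=> x'; rewrite none.
have -> : (x \in h @: U) = false.
  by apply/imsetP=> [[x' _ E]]; move: (none x'); rewrite -E eqxx.
by [].
Qed.

Lemma W_tr (A : {set Et g'}) (U : {set V'}) : W (phi @: A) vc (h @: U) = W A vc' U.
Proof.
rewrite /W (eq_bigl (fun P : {set Et g} => P \in [set phi @: P' | P' : {set Et g'} in
          [set P' : {set Et g'} | (P' \subset A) && pmU vc' U P']])); last first.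
  move=> P /=; apply/idP/idP.
    case/andP=> sPA pm.
    have EP : P = phi @: (phi @^-1: P).
      apply/setP=> e; apply/idP/idP.
        move=> eP; have := subsetP sPA e eP; case/imsetP=> a _ ea; subst e.
        by apply/imsetP; exists a => //; rewrite inE.
      by case/imsetP=> a; rewrite inE => aP ->.
    apply/imsetP; exists (phi @^-1: P) => //; rewrite inE.
    rewrite -pm_tr -EP pm andbT.
    apply/subsetP => a; rewrite inE => aP; have := subsetP sPA _ aP.
    by rewrite mem_imset.
  case/imsetP => P'; rewrite inE => /andP [sPA pm] ->.
  by rewrite imsetS // pm_tr pm.
rewrite big_imset /=; last by move=> P1 P2 _ _; apply: imset_inj.
apply: eq_big => [P'|P' _]; first by rewrite inE.
rewrite big_imset /=; last by move=> a b _ _; apply: phiI.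
by apply: eq_bigr => i _; rewrite Hw.
Qed.

End Transport.
Section Reduce.
Variable V : finType.
Variables g1 g2 : eg V.
Implicit Types (U : {set V}) (vc : V -> nat) (x y z : V).

Lemma W_reduce (A1 : {set Et g1}) (A2 : {set Et g2}) vc1 vc2 (Z S Y : {set V}) :
  (forall x, x \in Z -> x \notin S) -> (forall x, x \in Z -> x \notin Y) ->
  (forall x, x \in S -> x \notin Y) ->
  (forall (i : Et g1) y, i \in A1 -> y \in Y -> ~~ touch i y) ->
  (forall (i : Et g2) z, i \in A2 -> z \in Z -> ~~ touch i z) ->
  (\sum_(U1 : {set V} | U1 \subset Z :|: S :|: Y)
      W A1 vc1 U1 * W A2 vc2 ((Z :|: S :|: Y) :\: U1))%R =
  (\sum_(S' : {set V} | S' \subset S) W A1 vc1 (Z :|: S') * W A2 vc2 (Y :|: (S :\: S')))%R.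
Proof.
move=> dZS dZY dSY h1 h2.
set T := Z :|: S :|: Y.
have hinj : {in [set S' : {set V} | S' \subset S] &, injective (fun S' => Z :|: S')}.
  move=> S1 S2; rewrite !inE => s1 s2 E; apply/setP=> x.
  have := congr1 (fun X : {set V} => x \in X) E; rewrite /= !inE.
  case: (boolP (x \in Z)) => xZ //=.
  have := dZS x xZ => nS.
  by rewrite (negPf (contra (subsetP s1 x) nS)) (negPf (contra (subsetP s2 x) nS)).
have EY : forall S' : {set V}, S' \subset S -> T :\: (Z :|: S') = Y :|: (S :\: S').
  move=> S' sS; apply/setP=> x; rewrite !inE.
  case: (boolP (x \in Z)) => xZ /=.
    by rewrite (negPf (dZY x xZ)) (negPf (dZS x xZ)) andbF.
  case: (boolP (x \in Y)) => xY /=; last by rewrite orbF.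
  rewrite orbT andbT; apply/negP=> xS'; move: (dSY x (subsetP sS x xS')); by rewrite xY.
transitivity (\sum_(U1 in [set Z :|: S' | S' in [set S' : {set V} | S' \subset S]])
                W A1 vc1 U1 * W A2 vc2 (T :\: U1))%R; last first.
  rewrite big_imset //=; apply: eq_big => [S'|S']; first by rewrite inE.
  by rewrite inE => sS; rewrite EY.
rewrite [LHS]big_mkcond [RHS]big_mkcond; apply: eq_bigr => U1 _ /=.
case: ifP => sUT; case: ifP => // Uim.
- (* U1 not in image: the term vanishes *)
  case: (boolP [exists y, (y \in U1) && (y \in Y)]) => [/existsP[y /andP[yU yY]]|nY].
    rewrite (W_uncov (x := y)) ?mul0r // => i iA _; exact: h1.
  case: (boolP (Z \subset U1)) => sZ; last first.
    case/subsetPn: sZ => z zZ zU.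
    rewrite (W_uncov (x := z) (U := T :\: U1)) ?mulr0 //; first by rewrite !inE zU zZ.
    by move=> i iA _; exact: h2.
  exfalso; move/negP: Uim; apply; apply/imsetP; exists (U1 :&: S).
    by rewrite inE subsetIr.
  apply/setP=> x; rewrite !inE; case: (boolP (x \in U1)) => xU /=.
    case: (boolP (x \in Z)) => //= xZ.
    have := subsetP sUT x xU; rewrite !inE (negPf xZ) /= => /orP[->|xY] //.
    by exfalso; move/negP: nY; apply; apply/existsP; exists x; rewrite xU xY.
  rewrite orbF; apply/esym/negP=> xZ; move/negP: xU; apply; exact: (subsetP sZ).
- exfalso; move/negP: sUT; apply; case/imsetP: Uim => S'; rewrite inE => sS ->.
  apply/subsetP=> x; rewrite !inE => /orP[->|xS] //.
  by rewrite (subsetP sS x xS) orbT.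
Qed.

End Reduce.

Definition eg_of_ec (V : finType) (M : ecgraph V) : eg V :=
  EG (src M) (dst M) (csrc M) (cdst M) (wgt M).

Definition ec_of_eg (V : finType) (g : eg V) : ecgraph V :=
  @ECGraph V #|Et g| (fun i => es (enum_val i)) (fun i => et (enum_val i))
    (fun i => ecs (enum_val i)) (fun i => ect (enum_val i)) (fun i => ew (enum_val i)).

Lemma is_pm_pmU (V : finType) (M : ecgraph V) vc P :
  is_pm (M:=M) vc P = pmU (g:=eg_of_ec M) vc setT P.
Proof.
rewrite /is_pm /pmU; congr (_ && _); apply: eq_forallb => x.
by rewrite in_setT.
Qed.

Lemma vc_weight_W (V : finType) (M : ecgraph V) vc :
  vc_weight M vc = W (g:=eg_of_ec M) setT vc setT.
Proof.
by rewrite /vc_weight /W; apply: eq_bigl => P; rewrite subsetT /= is_pm_pmU.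
Qed.

Lemma ec_weight (V : finType) (g : eg V) vc :
  vc_weight (ec_of_eg g) vc = W (g:=g) setT vc setT.
Proof.
rewrite vc_weight_W.
have := @W_tr V V g (eg_of_ec (ec_of_eg g)) id enum_val (fun x y (e : id x = id y) => e)
  enum_val_inj (fun _ => erefl) (fun _ => erefl) (fun _ => erefl) (fun _ => erefl)
  (fun _ => erefl) vc vc (fun _ => erefl) setT setT.
rewrite imset_id => <-; congr W; apply/setP=> i; rewrite in_setT.
by apply/imsetP; exists (enum_rank i); rewrite ?in_setT ?enum_rankK.
Qed.

Lemma ec_feasible (V : finType) (g : eg V) vc :
  feasible (ec_of_eg g) vc -> exists P : {set Et g}, pmU vc setT P.
Proof.
case=> P pm; exists (enum_val @: P).
have := @pm_tr V V g (eg_of_ec (ec_of_eg g)) id enum_val (fun x y (e : id x = id y) => e)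
  enum_val_inj (fun _ => erefl) (fun _ => erefl) (fun _ => erefl) (fun _ => erefl)
  vc vc (fun _ => erefl) setT P.
by rewrite imset_id => ->; rewrite -is_pm_pmU.
Qed.

Lemma feasible_of_weight (V : finType) (M : ecgraph V) vc :
  vc_weight M vc != 0%R -> feasible M vc.
Proof.
rewrite /vc_weight; case: (pickP (is_pm (M:=M) vc)) => [P HP _ | none]; first by exists P.
by rewrite big_pred0 ?eqxx.
Qed.

Lemma ec_skel (V : finType) (g : eg V) u v :
  ecskeleton (ec_of_eg g) u v =
  [exists i : Et g, ((es i == u) && (et i == v)) || ((es i == v) && (et i == u))].
Proof.
apply/existsP/existsP => [[i H]|[i H]]; first by exists (enum_val i).
by exists (enum_rank i); rewrite /= enum_rankK.
Qed.

Lemma ec_loopless (V : finType) (g : eg V) :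
  (forall i : Et g, es i != et i) -> ecloopless (ec_of_eg g).
Proof. by move=> H i; apply: H. Qed.
Definition sumeg (V : finType) (g1 g2 : eg V) : eg V :=
  @EG V (Et g1 + Et g2)%type
    (fun e => match e with inl i => es i | inr j => es j end)
    (fun e => match e with inl i => et i | inr j => et j end)
    (fun e => match e with inl i => ecs i | inr j => ecs j end)
    (fun e => match e with inl i => ect i | inr j => ect j end)
    (fun e => match e with inl i => ew i | inr j => ew j end).

Lemma W_inl (V : finType) (g1 g2 : eg V) (A : {set Et g1}) vc (U : {set V}) :
  W (g:=sumeg g1 g2) (inl @: A) vc U = W (g:=g1) A vc U.
Proof.
have := @W_tr V V (sumeg g1 g2) g1 id inl (fun x y (e : id x = id y) => e)
  (fun a b (e : inl a = inl b) => ltac:(by case: e)) (fun _ => erefl) (fun _ => erefl)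
  (fun _ => erefl) (fun _ => erefl) (fun _ => erefl) vc vc (fun _ => erefl) A U.
by rewrite imset_id.
Qed.

Lemma W_inr (V : finType) (g1 g2 : eg V) (A : {set Et g2}) vc (U : {set V}) :
  W (g:=sumeg g1 g2) (inr @: A) vc U = W (g:=g2) A vc U.
Proof.
have := @W_tr V V (sumeg g1 g2) g2 id inr (fun x y (e : id x = id y) => e)
  (fun a b (e : inr a = inr b) => ltac:(by case: e)) (fun _ => erefl) (fun _ => erefl)
  (fun _ => erefl) (fun _ => erefl) (fun _ => erefl) vc vc (fun _ => erefl) A U.
by rewrite imset_id.
Qed.

Lemma sum_setT (V : finType) (g1 g2 : eg V) :
  [set: Et (sumeg g1 g2)] = inl @: [set: Et g1] :|: inr @: [set: Et g2].
Proof.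
apply/setP=> [[i|j]]; rewrite !inE.
  by rewrite (mem_imset _ _ (fun a b (e : inl a = inl b) => ltac:(by case: e))) in_setT.
rewrite (mem_imset _ _ (fun a b (e : inr a = inr b) => ltac:(by case: e))) in_setT orbT.
by [].
Qed.

Lemma sum_disj (V : finType) (g1 g2 : eg V) :
  [disjoint (inl @: [set: Et g1]) & (inr @: [set: Et g2] : {set Et (sumeg g1 g2)})].
Proof.
rewrite -setI_eq0; apply/eqP/setP=> e; rewrite !inE.
apply/negP=> /andP[/imsetP[a _ ->] /imsetP[b _]] //.
Qed.

Lemma W_sum (V : finType) (g1 g2 : eg V) vc (U : {set V}) :
  W (g:=sumeg g1 g2) setT vc U =
  (\sum_(U1 : {set V} | U1 \subset U) W (g:=g1) setT vc U1 * W (g:=g2) setT vc (U :\: U1))%R.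
Proof.
rewrite sum_setT W_split; last exact: sum_disj.
by apply: eq_bigr => U1 _; rewrite W_inl W_inr.
Qed.

Lemma W_sum_zero (V : finType) (g1 g2 : eg V) vc (U : {set V}) :
  (forall j : Et g2, ew j = 0%R) ->
  W (g:=sumeg g1 g2) setT vc U = W (g:=g1) setT vc U.
Proof.
move=> Hz; rewrite -(@W_inl _ g1 g2); apply: W_zero; first exact: subsetT.
move=> [i|j] _; last by rewrite /= Hz.
by move/negP; case; apply/imsetP; exists i; rewrite ?in_setT.
Qed.

Section Pull.
Variables (V : finType) (p : pred V) (x0 : {x : V | p x}).
Definition pull (g : eg V) : eg {x : V | p x} :=
  @EG _ (Et g) (fun i => insubd x0 (es i)) (fun i => insubd x0 (et i)) (@ecs _ g) (@ect _ g) (@ew _ g).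

Lemma W_pull (g : eg V) (A : {set Et g}) vc (vc' : {x : V | p x} -> nat) (U : {set {x : V | p x}}) :
  (forall i : Et g, p (es i) && p (et i)) -> (forall y, vc' y = vc (val y)) ->
  W (g:=pull g) A vc' U = W (g:=g) A vc (val @: U).
Proof.
move=> Hp Hv.
have := @W_tr V _ g (pull g) val id val_inj (fun a b (e : id a = id b) => e)
  (fun i => ltac:(by rewrite /= insubdK //; case/andP: (Hp i)))
  (fun i => ltac:(by rewrite /= insubdK //; case/andP: (Hp i)))
  (fun _ => erefl) (fun _ => erefl) (fun _ => erefl) vc vc' Hv A U.
by rewrite imset_id => ->.
Qed.

Lemma pm_pull (g : eg V) (P : {set Et g}) vc (vc' : {x : V | p x} -> nat) (U : {set {x : V | p x}}) :
  (forall i : Et g, p (es i) && p (et i)) -> (forall y, vc' y = vc (val y)) ->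
  pmU (g:=pull g) vc' U P -> pmU (g:=g) vc (val @: U) P.
Proof.
move=> Hp Hv.
have := @pm_tr V _ g (pull g) val id val_inj (fun a b (e : id a = id b) => e)
  (fun i => ltac:(by rewrite /= insubdK //; case/andP: (Hp i)))
  (fun i => ltac:(by rewrite /= insubdK //; case/andP: (Hp i)))
  (fun _ => erefl) (fun _ => erefl) vc vc' Hv U P.
by rewrite imset_id => ->.
Qed.
End Pull.

Lemma is_pm_ext (V : finType) (M : ecgraph V) vc1 vc2 P :
  (forall x, vc1 x = vc2 x) -> is_pm (M:=M) vc1 P = is_pm (M:=M) vc2 P.
Proof.
move=> H; rewrite /is_pm; congr (_ && _); apply: eq_forallb_in => i _.
by rewrite /filtered !H.
Qed.

Lemma weight_ext (V : finType) (M : ecgraph V) vc1 vc2 :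
  (forall x, vc1 x = vc2 x) -> vc_weight M vc1 = vc_weight M vc2.
Proof. by move=> H; apply: eq_bigl => P; apply: is_pm_ext. Qed.

Lemma finish (V' : finType) (x0 : V') (gF : eg V') (Cf : pred nat) n (cs : 'I_n -> nat) :
  (forall i : Et gF, es i != et i) ->
  (forall u v : V', u != v -> exists i : Et gF, es i = u /\ et i = v) ->
  (forall vc, (forall u v, vc u = vc v) -> feasible (ec_of_eg gF) vc -> Cf (vc x0)) ->
  (forall vc, (forall u v, vc u = vc v) -> Cf (vc x0) -> vc_weight (ec_of_eg gF) vc = 1%R) ->
  (forall vc, ~ (forall u v, vc u = vc v) -> vc_weight (ec_of_eg gF) vc = 0%R) ->
  (forall k, Cf (cs k)) -> injective cs ->
  mu_ge [rel u v : V' | u != v] n.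
Proof.
move=> Hl Hsk Hfe H1 H0 Hc Hinj.
exists (ec_of_eg gF); split.
- exact: ec_loopless.
- move=> u v; rewrite ec_skel /=; apply/existsP/idP.
    case=> i /orP[]/andP[/eqP<- /eqP<-]; first exact: Hl.
    by rewrite eq_sym; apply: Hl.
  by move=> nuv; case: (Hsk u v nuv) => i [<- <-]; exists i; rewrite !eqxx.
- move=> vc; split.
    by move=> mono fe; apply: H1 => //; apply: Hfe.
  exact: H0.
- exists (fun k _ => cs k); split.
    move=> k; split; first by [].
    by apply: feasible_of_weight; rewrite H1 ?oner_eq0.
  move=> k l nkl; exists x0 => E; move/eqP: nkl; apply; exact: Hinj.
Qed.
Section Main.
Variables (V : finType) (M : ecgraph V) (S V1 V2 : {set V}) (v0 a b c y2 : V).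
Hypotheses (Hloop : ecloopless M)
  (HnoE : forall i, (src M i \in V1) -> (dst M i \notin V2))
  (HnoE' : forall i, (src M i \in V2) -> (dst M i \notin V1))
  (Hpart : V1 :|: V2 = ~: S) (Hdisj : V1 :&: V2 = set0)
  (Hv0 : v0 \in V1) (Hy2 : y2 \in V2) (Hodd1 : odd #|V1|) (Heven2 : ~~ odd #|V2|)
  (HSabc : S = [set a; b; c]) (Hab : a != b) (Hac : a != c) (Hbc : b != c)
  (HG : GHZ M).

Lemma mS1 x : x \in S -> x \notin V1.
Proof.
move=> xS; apply/negP=> x1; have := congr1 (fun X : {set V} => x \in X) Hpart.
by rewrite /= !inE x1 xS.
Qed.
Lemma mS2 x : x \in S -> x \notin V2.
Proof.
move=> xS; apply/negP=> x2; have := congr1 (fun X : {set V} => x \in X) Hpart.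
by rewrite /= !inE x2 xS orbT.
Qed.
Lemma m12 x : x \in V1 -> x \notin V2.
Proof.
move=> x1; apply/negP=> x2; have := congr1 (fun X : {set V} => x \in X) Hdisj.
by rewrite /= !inE x1 x2.
Qed.
Lemma mall x : x \notin V1 -> x \notin V2 -> x \in S.
Proof.
move=> n1 n2; have := congr1 (fun X : {set V} => x \in X) Hpart.
by rewrite /= !inE (negPf n1) (negPf n2) /=; case: (x \in S).
Qed.

Lemma HS3 : #|S| = 3.
Proof.
rewrite HSabc setUC cardsU1 cards2 Hab !inE negb_or ![c == _]eq_sym Hac Hbc.
by [].
Qed.

Definition gM := eg_of_ec M.
Definition E1 : {set Et gM} := [set i : 'I_(nE M) | (src M i \notin V2) && (dst M i \notin V2)].
Definition E2 : {set Et gM} := ~: E1.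

Lemma lfM (A : {set Et gM}) : loopfree A.
Proof. by move=> i _; apply: Hloop. Qed.

Lemma E1_V2 i y : i \in E1 -> y \in V2 -> ~~ touch (g:=gM) i y.
Proof.
rewrite inE /touch => /andP[n1 n2] y2'; apply/negP=> /orP[]/eqP E.
  by have E' : src M i = y := E; move: n1; rewrite E' y2'.
by have E' : dst M i = y := E; move: n2; rewrite E' y2'.
Qed.

Lemma E2_V1 i z : i \in E2 -> z \in V1 -> ~~ touch (g:=gM) i z.
Proof.
rewrite !inE negb_and !negbK /touch /= => H z1; apply/negP=> /orP[]/eqP E.
  have E' : src M i = z := E; subst z.
  by have := HnoE z1; have := m12 z1; case/orP: H => [->|->].
have E' : dst M i = z := E; subst z; case/orP: H => H.
  by have := HnoE' H; rewrite z1.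
by have := m12 z1; rewrite H.
Qed.

Definition N := (\max_(i : 'I_(nE M)) maxn (csrc M i) (cdst M i)).+1.
Lemma csN i : csrc M i < N.
Proof.
rewrite ltnS; apply: leq_trans (leq_bigmax i); exact: leq_maxl.
Qed.
Lemma cdN i : cdst M i < N.
Proof.
rewrite ltnS; apply: leq_trans (leq_bigmax i); exact: leq_maxr.
Qed.

Lemma W_big (A : {set Et gM}) vc (U : {set V}) x : x \in U -> N <= vc x -> W A vc U = 0%R.
Proof.
move=> xU Nx; apply: (W_uncov xU) => i _ /andP[/eqP e1 /eqP e2].
have h1 : @ecs _ gM i < N := csN i.
have h2 : @ect _ gM i < N := cdN i.
rewrite /touch; apply/negP=> /orP[]/eqP E.
  by move: h1; rewrite e1 E ltnNge Nx.
by move: h2; rewrite e2 E ltnNge Nx.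
Qed.

Lemma MD vc : vc_weight M vc =
  (\sum_(S' : {set V} | S' \subset S) W (g:=gM) E1 vc (V1 :|: S') * W (g:=gM) E2 vc (V2 :|: (S :\: S')))%R.
Proof.
rewrite vc_weight_W.
have -> : [set: Et (eg_of_ec M)] = E1 :|: E2 by rewrite setUCr.
rewrite W_split; last by rewrite -setI_eq0 setICr.
have ET : [set: V] = V1 :|: S :|: V2.
  apply/setP=> x; rewrite !inE; case: (boolP (x \in V1)) => //= n1.
  case: (boolP (x \in V2)) => n2; rewrite ?orbT //= (mall n1 n2) //.
rewrite ET; apply: W_reduce.
- by move=> x x1; apply/negP=> xS; move: (mS1 xS); rewrite x1.
- exact: m12.
- exact: mS2.
- exact: E1_V2.
- exact: E2_V1.
Qed.

Definition beta d := W (g:=gM) E2 (fun _ => d) V2.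

Definition sv (k : 'I_3) := match val k with 0 => a | 1 => b | _ => c end.
Definition pv (k : 'I_3) := match val k with 0 => b | _ => a end.
Definition qv (k : 'I_3) := match val k with 2 => b | _ => c end.

Lemma pq_ne k : pv k != qv k.
Proof. by case: k => [[|[|[|k]]] Hk] //=; rewrite eq_sym. Qed.
Lemma sv_S k : sv k \in S.
Proof. by rewrite HSabc; case: k => [[|[|[|k]]] Hk] //=; rewrite !inE eqxx ?orbT. Qed.
Lemma pv_S k : pv k \in S.
Proof. by rewrite HSabc; case: k => [[|[|[|k]]] Hk] //=; rewrite !inE eqxx ?orbT. Qed.
Lemma qv_S k : qv k \in S.
Proof. by rewrite HSabc; case: k => [[|[|[|k]]] Hk] //=; rewrite !inE eqxx ?orbT. Qed.
Lemma pv_sv k : pv k != sv k.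
Proof. by case: k => [[|[|[|k]]] Hk] //=; rewrite eq_sym. Qed.
Lemma qv_sv k : qv k != sv k.
Proof. by case: k => [[|[|[|k]]] Hk] //=; rewrite eq_sym. Qed.

Lemma sv_inj : injective sv.
Proof.
move=> k l; rewrite /sv; case: k => [[|[|[|k]]] Hk] //=; case: l => [[|[|[|l]]] Hl] //= E;
  try (by apply: val_inj);
  by move: Hab Hac Hbc; rewrite E ?eqxx.
Qed.

Lemma inS x : x \in S -> exists k, x = sv k.
Proof.
rewrite HSabc !inE => /orP[/orP[]|] /eqP ->.
- by exists (@Ordinal 3 0 isT).
- by exists (@Ordinal 3 1 isT).
- by exists (@Ordinal 3 2 isT).
Qed.

Lemma S_minus k : S :\ sv k = [set pv k; qv k].
Proof.
apply/esym/eqP; rewrite eqEcard; apply/andP; split.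
  apply/subsetP=> x; rewrite !inE => /orP[]/eqP->.
    by rewrite pv_sv pv_S.
  by rewrite qv_sv qv_S.
rewrite cards2 pq_ne.
by move: (cardsD1 (sv k) S); rewrite sv_S HS3 /= add1n => [[<-]].
Qed.

Lemma pair_inj k l : [set pv k; qv k] = [set pv l; qv l] -> k = l.
Proof.
rewrite -!S_minus => E; apply: sv_inj.
have := congr1 (fun X : {set V} => sv k \in X) E; rewrite /= !inE eqxx sv_S /= andbT.
by move/esym/negbFE/eqP.
Qed.

Lemma Tpair (T : {set V}) : T \subset S -> #|T| = 2 -> exists k, T = [set pv k; qv k].
Proof.
move=> sT cT.
have : ~~ (S \subset T).
  apply/negP=> sST; have := subset_leq_card sST; by rewrite HS3 cT.
case/subsetPn=> s sS sT'; case: (inS sS) => k ->{s sS} in sT'.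
exists k; apply/eqP; rewrite eqEcard cards2 pq_ne cT leqnn andbT -S_minus.
apply/subsetP=> x xT; rewrite !inE (subsetP sT x xT) andbT.
by apply/negP=> /eqP E; move: sT'; rewrite -E xT.
Qed.

Lemma Tsing (T : {set V}) : T \subset S -> #|T| = 1 -> exists k, T = [set sv k].
Proof.
move=> sT /eqP/cards1P[x E]; have : x \in S by apply: (subsetP sT); rewrite E inE.
by case/inS=> k Ex; exists k; rewrite E Ex.
Qed.

Lemma Tfull (T : {set V}) : T \subset S -> #|T| = 3 -> T = S.
Proof. by move=> sT cT; apply/eqP; rewrite eqEcard sT HS3 cT. Qed.

Lemma cardVT (T : {set V}) : T \subset S -> #|V2 :|: T| = #|V2| + #|T|.
Proof.
move=> sT; rewrite cardsU.
have -> : V2 :&: T = set0.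
  apply/setP=> x; rewrite !inE; apply/negP=> /andP[x2 xT].
  by move: (mS2 (subsetP sT x xT)); rewrite x2.
by rewrite cards0 subn0.
Qed.

Lemma cardV1T (T : {set V}) : T \subset S -> #|V1 :|: T| = #|V1| + #|T|.
Proof.
move=> sT; rewrite cardsU.
have -> : V1 :&: T = set0.
  apply/setP=> x; rewrite !inE; apply/negP=> /andP[x1 xT].
  by move: (mS1 (subsetP sT x xT)); rewrite x1.
by rewrite cards0 subn0.
Qed.

Definition colk (k : 'I_3) (al be d : nat) (x : V) : nat :=
  if x == pv k then al else if x == qv k then be else d.
Definition Yk (lam : nat -> CC) k al be : CC :=
  (\sum_(d < N) lam d * W (g:=gM) E2 (colk k al be d) (V2 :|: [set pv k; qv k]))%R.
Definition gN (lam : nat -> CC) (cst : CC) : eg V :=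
  @EG V ('I_3 * 'I_N * 'I_N)%type (fun t => pv t.1.1) (fun t => qv t.1.1)
    (fun t => nat_of_ord t.1.2) (fun t => nat_of_ord t.2)
    (fun t => cst * Yk lam t.1.1 t.1.2 t.2)%R.

Lemma gN_lf lam cst (A : {set Et (gN lam cst)}) : loopfree A.
Proof. by move=> t _; apply: pq_ne. Qed.

Lemma NL lam cst vc (vcd : nat -> V -> nat) (T : {set V}) :
  (forall d x, x \in V2 -> vcd d x = d) -> (forall d x, x \in S -> vcd d x = vc x) ->
  T \subset S -> T != set0 ->
  W (g:=gN lam cst) setT vc T =
  (cst * \sum_(d < N) lam d * W (g:=gM) E2 (vcd d) (V2 :|: T))%R.
Proof.
move=> H2 HS sT nT.
have cT : #|T| <= 3 by rewrite -HS3; apply: subset_leq_card.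
case: (boolP (odd #|T|)) => oT.
  rewrite W_odd //; last exact: gN_lf.
  rewrite big1 ?mulr0 // => d _; rewrite W_odd ?mulr0 //; first exact: lfM.
  by rewrite cardVT // oddD oT (negPf Heven2).
have c2 : #|T| = 2.
  move: cT oT nT; rewrite -card_gt0; case: #|T| => [|[|[|[|n]]]] //.
case: (Tpair sT c2) => k ET; subst T.
rewrite W_pair ?pq_ne //; last exact: gN_lf.
case: (boolP ((vc (pv k) < N) && (vc (qv k) < N))) => [/andP[h1 h2]|hN].
  rewrite (big_pred1 (k, Ordinal h1, Ordinal h2)); last first.
    move=> [[l al] be] /=; rewrite in_setT /filt /=.
    apply/idP/idP.
      case/andP=> /andP[/eqP E1' /eqP E2'] /eqP /pair_inj El; subst l.
      by apply/eqP; congr (_, _, _); apply: val_inj.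
    move/eqP=> [-> -> ->] /=; by rewrite !eqxx.
  rewrite /= /Yk; congr (_ * _)%R; apply: eq_bigr => d _; congr (_ * _)%R.
  apply: W_loc => x; rewrite !inE => /orP[x2|/orP[]/eqP->].
  - rewrite H2 // /colk.
    have n1 : x != pv k by apply/eqP=> E; move: (mS2 (pv_S k)); rewrite -E x2.
    have n2 : x != qv k by apply/eqP=> E; move: (mS2 (qv_S k)); rewrite -E x2.
    by rewrite (negPf n1) (negPf n2).
  - by rewrite /colk eqxx HS // pv_S.
  - by rewrite /colk eq_sym (negPf (pq_ne k)) eqxx HS // qv_S.
rewrite big_pred0; last first.
  move=> [[l al] be] /=; rewrite in_setT /filt /=; apply/negP.
  case/andP=> /andP[/eqP E1' /eqP E2'] /eqP /pair_inj El; subst l.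
  by move: hN; rewrite -E1' -E2' !ltn_ord.
rewrite big1 ?mulr0 // => d _.
move: hN; rewrite negb_and -!leqNgt => /orP[h|h].
  rewrite (@W_big _ _ _ (pv k)) ?mulr0 ?HS ?pv_S //; by rewrite !inE eqxx orbT.
rewrite (@W_big _ _ _ (qv k)) ?mulr0 ?HS ?qv_S //; by rewrite !inE eqxx !orbT.
Qed.


Definition Cf : pred nat :=
  fun cc => (cc < N) && [exists P : {set 'I_(nE M)}, is_pm (M:=M) (fun _ => cc) P].

Lemma HG1 cc vc : Cf cc -> (forall x, vc x = cc) -> vc_weight M vc = 1%R.
Proof.
case/andP=> _ /existsP[P HP] Hc; case: (HG vc) => H _; apply: H.
  by move=> u v; rewrite !Hc.
by exists P; rewrite (is_pm_ext _ Hc).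
Qed.

Lemma HG0 vc : ~ (forall u v, vc u = vc v) -> vc_weight M vc = 0%R.
Proof. by case: (HG vc). Qed.

Lemma dim_cs n : dim_ge M n -> exists cs : 'I_n -> nat, (forall k, Cf (cs k)) /\ injective cs.
Proof.
case=> f [Hf Hd]; exists (fun k => f k v0); split.
  move=> k; case: (Hf k) => mono [P HP]; apply/andP; split.
    have pm : pmU (g:=gM) (f k) setT P by rewrite -is_pm_pmU.
    case: (pm_ex (x:=v0) pm (in_setT _)) => i iP ti.
    case/andP: (pm_filt pm iP) => /eqP e1 _.
    have e1' : csrc M i = f k (src M i) := e1.
    by have := csN i; rewrite e1' (mono _ v0).
  by apply/existsP; exists P; rewrite -(is_pm_ext _ (fun x => mono x v0)).
move=> k l E; case: (eqVneq k l) => // /Hd [v []].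
case: (Hf k) => mk _; case: (Hf l) => ml _.
by rewrite (mk v v0) (ml v v0).
Qed.

Lemma nonmono_ext (V' : finType) (vc' : V' -> nat) (h : V' -> V) (vc : V -> nat) :
  (forall y, vc (h y) = vc' y) -> ~ (forall u v, vc' u = vc' v) -> ~ (forall u v, vc u = vc v).
Proof. by move=> H nm m; apply: nm => u v; rewrite -!H. Qed.

Lemma sum_single (lam : nat -> CC) (F : nat -> CC) cc :
  cc < N -> F cc = 1%R -> (forall d, d != cc -> F d = 0%R) ->
  (\sum_(d < N) lam d * F d)%R = lam cc.
Proof.
move=> hc H1 H0; rewrite (bigD1 (Ordinal hc)) //= H1 mulr1 big1 ?addr0 // => d nd.
rewrite H0 ?mulr0 //; apply/eqP=> E; move/eqP: nd; apply; apply: val_inj; exact: E.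
Qed.
Section Case1.
Variable d0 : 'I_N.
Hypothesis Hb0 : beta d0 != 0%R.

Definition bs := (\sum_(d < N) beta d)%R.
Definition lam1 (d : nat) : CC := if bs != 0%R then 1%R else (1 + (d == d0 :> nat)%:R)%R.
Definition bl := (\sum_(d < N) lam1 d * beta d)%R.

Lemma bl_ne0 : bl != 0%R.
Proof.
rewrite /bl; case: (boolP (bs != 0%R)) => H.
  by rewrite (eq_bigr (fun d : 'I_N => beta d)) // => d _; rewrite /lam1 H mul1r.
rewrite (eq_bigr (fun d : 'I_N => beta d + (d == d0 :> nat)%:R * beta d)%R); last first.
  by move=> d _; rewrite /lam1 (negPf H) mulrDl mul1r.
rewrite big_split /= -/bs (eqP (negbNE H)) add0r.
rewrite (bigD1 d0) //= eqxx mul1r big1 ?addr0 // => d nd.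
by rewrite (_ : (d == d0 :> nat) = false) ?mul0r //; exact: negbTE nd.
Qed.

Lemma lam1_ne0 d : lam1 d != 0%R.
Proof.
rewrite /lam1; case: ifP => _; first exact: oner_neq0.
by case: (d == d0 :> nat); rewrite ?addr0 ?oner_neq0 // -mulr2n pnatr_eq0.
Qed.

Definition kap1 (cc : nat) : CC := (bl / lam1 cc)%R.

Definition E1ok : {set Et gM} := [set i in E1 | okv (g:=gM) v0 Cf i].

Definition g1 : eg V :=
  @EG V {i : 'I_(nE M) | i \in E1ok} (fun j => src M (val j)) (fun j => dst M (val j))
    (fun j => csrc M (val j)) (fun j => cdst M (val j))
    (fun j => (fac (g:=gM) v0 kap1 (val j) * wgt M (val j))%R).

Lemma W_g1 vc (U : {set V}) : v0 \in U ->
  W (g:=g1) setT vc U = ((if Cf (vc v0) then kap1 (vc v0) else 0) * W (g:=gM) E1 vc U)%R.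
Proof.
move=> vU.
have := @W_tr V V (gsc gM v0 kap1) g1 id val (fun x y (e : id x = id y) => e) val_inj
  (fun _ => erefl) (fun _ => erefl) (fun _ => erefl) (fun _ => erefl) (fun _ => erefl)
  vc vc (fun _ => erefl) setT U.
rewrite imset_id => <-.
have -> : val @: [set: Et g1] = E1ok.
  apply/setP=> i; apply/imsetP/idP => [[j _ ->]|Hi]; first exact: (valP j).
  by exists (Sub i Hi).
exact: W_scale.
Qed.

Definition p2 (x : V) : bool := x \notin V2.
Definition Vp := {x : V | p2 x}.
Definition x0p : Vp := exist _ v0 (m12 Hv0).

Definition gD1 : eg V :=
  @EG V {pp : Vp * Vp | pp.1 != pp.2} (fun e => val (val e).1) (fun e => val (val e).2)
    (fun _ => 0) (fun _ => 1) (fun _ => 0%R).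

Definition gN1 := gN lam1 (bl^-1)%R.
Definition gall1 := sumeg (sumeg g1 gN1) gD1.
Definition gF1 : eg Vp := pull x0p gall1.

Lemma gall1_p (i : Et gall1) : p2 (es i) && p2 (et i).
Proof.
case: i => [[j|t]|e] /=.
- have := valP j; rewrite !inE => /andP[/andP[n1 n2] _]; by rewrite /p2 n1 n2.
- by rewrite /p2 (mS2 (pv_S _)) (mS2 (qv_S _)).
- by rewrite (valP (val e).1) (valP (val e).2).
Qed.

Lemma gall1_lf (i : Et gall1) : es i != et i.
Proof.
case: i => [[j|t]|e] /=.
- exact: Hloop.
- exact: pq_ne.
- by apply/eqP=> E; move: (valP e); rewrite /= (val_inj E) eqxx.
Qed.

Definition ext1 (vc' : Vp -> nat) (x : V) : nat :=
  if (insub x : option Vp) is Some y then vc' y else 0.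
Lemma ext1_val vc' y : ext1 vc' (val y) = vc' y.
Proof. by rewrite /ext1 valK. Qed.
Definition vcd1 (vc' : Vp -> nat) (d : nat) (x : V) : nat := if x \in V2 then d else ext1 vc' x.

Lemma Vp_set : val @: [set: Vp] = V1 :|: S :|: set0.
Proof.
apply/setP=> x; rewrite !inE orbF; apply/imsetP/idP.
  case=> y _ ->; have n2 := valP y.
  case: (boolP (val y \in V1)) => //= n1; exact: mall n1 n2.
move=> H; have n2 : p2 x.
  by case/orP: H => [/m12|/mS2].
by exists (Sub x n2); rewrite ?SubK.
Qed.

Lemma gN1_eq vc' (S' : {set V}) : S' \subset S ->
  W (g:=gN1) setT (ext1 vc') (set0 :|: (S :\: S')) =
  (bl^-1 * \sum_(d < N) lam1 d * W (g:=gM) E2 (vcd1 vc' d) (V2 :|: (S :\: S')))%R.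
Proof.
move=> sS; rewrite set0U; case: (eqVneq (S :\: S') set0) => E.
  rewrite E W_set0 setU0.
  rewrite (eq_bigr (fun d : 'I_N => lam1 d * beta d)%R); first by rewrite -/bl mulVf ?bl_ne0.
  move=> d _; congr (_ * _)%R; apply: W_loc => x x2; by rewrite /vcd1 x2.
apply: NL => //.
- by move=> d x x2; rewrite /vcd1 x2.
- by move=> d x xS; rewrite /vcd1 (negPf (mS2 xS)).
- exact: subsetDl.
Qed.

Lemma F1 vc' : vc_weight (ec_of_eg gF1) vc' =
  ((if Cf (ext1 vc' v0) then kap1 (ext1 vc' v0) else 0) * bl^-1 *
   \sum_(d < N) lam1 d * vc_weight M (vcd1 vc' d))%R.
Proof.
rewrite ec_weight (@W_pull V p2 x0p gall1 setT (ext1 vc') vc' setT); last first.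
- by move=> y; rewrite ext1_val.
- exact: gall1_p.
rewrite W_sum_zero // W_sum Vp_set W_reduce; first last.
- move=> t z _ z1; rewrite /touch /=; apply/negP=> /orP[]/eqP E.
    by move: (mS1 (pv_S t.1.1)); rewrite E z1.
  by move: (mS1 (qv_S t.1.1)); rewrite E z1.
- by move=> i y _; rewrite inE.
- by move=> x; rewrite inE.
- by move=> x; rewrite inE.
- by move=> x x1; apply/negP=> xS; move: (mS1 xS); rewrite x1.
set kc := (if Cf (ext1 vc' v0) then kap1 (ext1 vc' v0) else 0%R).
rewrite (eq_bigr (fun d : 'I_N => \sum_(S' : {set V} | S' \subset S)
   lam1 d * (W (g:=gM) E1 (ext1 vc') (V1 :|: S') *
             W (g:=gM) E2 (vcd1 vc' d) (V2 :|: (S :\: S'))))%R); last first.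
  move=> d _; rewrite MD mulr_sumr; apply: eq_bigr => S' sS; congr (_ * (_ * _))%R.
  apply: W_loc => x; rewrite !inE => /orP[x1|xS]; rewrite /vcd1.
    by rewrite (negPf (m12 x1)).
  by rewrite (negPf (mS2 (subsetP sS x xS))).
rewrite exchange_big /= mulr_sumr; apply: eq_bigr => S' sS.
rewrite W_g1; last by rewrite !inE Hv0.
rewrite gN1_eq // -/kc.
rewrite [in RHS](eq_bigr (fun d : 'I_N => W (g:=gM) E1 (ext1 vc') (V1 :|: S') *
   (lam1 d * W (g:=gM) E2 (vcd1 vc' d) (V2 :|: (S :\: S'))))%R); last first.
  by move=> d _; rewrite mulrCA.
rewrite -[in RHS]mulr_sumr.
ring.
Qed.

Lemma vcd1_val vc' d y : vcd1 vc' d (val y) = vc' y.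
Proof. by rewrite /vcd1 (negPf (valP y)) ext1_val. Qed.

Lemma case1 n : dim_ge M n -> mu_ge [rel u v : Vp | u != v] n.
Proof.
case/dim_cs => cs [Hc Hi].
have e0 : forall vc', ext1 vc' v0 = vc' x0p := fun vc' => ext1_val vc' x0p.
apply: (@finish Vp x0p gF1 Cf n cs) => //.
- move=> i /=; apply/eqP=> E; have := congr1 val E.
  rewrite !insubdK; [exact/eqP/gall1_lf | by case/andP: (gall1_p i) | by case/andP: (gall1_p i)].
- move=> u v nuv; exists (inr (exist _ (u, v) nuv)); by rewrite /= !valKd.
- move=> vc' mono fe; case: (ec_feasible fe) => P pm.
  have pm2 := pm_pull gall1_p (fun y => esym (ext1_val vc' y)) pm.
  have v0U : v0 \in val @: [set: Vp] by rewrite Vp_set !inE Hv0.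
  case: (pm_ex pm2 v0U) => i iP ti; have fi := pm_filt pm2 iP.
  rewrite -e0; move: i iP ti fi; case=> [[j|t]|e] iP ti fi.
  + have := valP j; rewrite !inE => /andP[_].
    by rewrite (@okv_touch V gM v0 Cf (ext1 vc') (val j) fi ti).
  + exfalso; move: ti; rewrite /touch /= => /orP[]/eqP E.
      by move: (mS1 (pv_S t.1.1)); rewrite E Hv0.
    by move: (mS1 (qv_S t.1.1)); rewrite E Hv0.
  + exfalso; move: fi; rewrite /filt /= !ext1_val (mono (val e).2 (val e).1).
    by case/andP=> /eqP <-.
- move=> vc' mono cf; rewrite F1 e0 cf.
  set cc := vc' x0p.
  have ccN : cc < N by case/andP: cf.
  rewrite (@sum_single lam1 (fun d => vc_weight M (vcd1 vc' d)) cc ccN).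
  + rewrite /kap1; field; by rewrite bl_ne0 lam1_ne0.
  + apply: (@HG1 cc _ cf) => x; rewrite /vcd1; case: (boolP (x \in V2)) => n2 //.
    have Px : p2 x := n2.
    by rewrite -[x]/(val (exist p2 x Px)) ext1_val; apply: mono.
  + move=> d nd; apply: HG0 => mm; move/eqP: nd; apply.
    by rewrite /cc -(vcd1_val vc' d x0p) -(mm y2 (val x0p)) /vcd1 Hy2.
- move=> vc' nm; rewrite F1; case: ifP => _; last by rewrite !mul0r.
  rewrite big1 ?mulr0 // => d _; rewrite HG0 ?mulr0 //.
  exact: (nonmono_ext (h := val) (vcd1_val vc' d) nm).
Qed.

End Case1.
Section Case2.
Hypothesis Hb : forall d : 'I_N, beta d = 0%R.

Definition p3 (x : V) : bool := (x \in S) || (x == v0).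
Lemma p3v0 : p3 v0. Proof. by rewrite /p3 eqxx orbT. Qed.
Definition Vq := {x : V | p3 x}.
Definition x0q : Vq := exist _ v0 p3v0.

Definition colz (k : 'I_3) (e al : nat) (x : V) : nat := if x == sv k then al else e.
Definition Wz k e al := W (g:=gM) E1 (colz k e al) (V1 :|: [set sv k]).

Definition gz : eg V :=
  @EG V {t : 'I_3 * 'I_N * 'I_N | Cf t.1.2} (fun _ => v0) (fun t => sv (val t).1.1)
    (fun t => nat_of_ord (val t).1.2) (fun t => nat_of_ord (val t).2)
    (fun t => Wz (val t).1.1 (val t).1.2 (val t).2).
Definition gN2 := gN (fun _ => 1%R) 1%R.
Definition gD2 : eg V :=
  @EG V {pp : Vq * Vq | pp.1 != pp.2} (fun e => val (val e).1) (fun e => val (val e).2)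
    (fun _ => 0) (fun _ => 1) (fun _ => 0%R).
Definition gall2 := sumeg (sumeg gz gN2) gD2.
Definition gF2 : eg Vq := pull x0q gall2.

Lemma v0_sv k : v0 != sv k.
Proof. by apply/eqP=> E; move: (mS1 (sv_S k)); rewrite -E Hv0. Qed.

Lemma gall2_p (i : Et gall2) : p3 (es i) && p3 (et i).
Proof.
case: i => [[t|t]|e] /=.
- by rewrite p3v0 /p3 sv_S.
- by rewrite /p3 pv_S qv_S.
- by rewrite (valP (val e).1) (valP (val e).2).
Qed.

Lemma gall2_lf (i : Et gall2) : es i != et i.
Proof.
case: i => [[t|t]|e] /=.
- exact: v0_sv.
- exact: pq_ne.
- by apply/eqP=> E; move: (valP e); rewrite /= (val_inj E) eqxx.
Qed.

Definition ext2 (vc' : Vq -> nat) (x : V) : nat :=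
  if (insub x : option Vq) is Some y then vc' y else 0.
Lemma ext2_val vc' y : ext2 vc' (val y) = vc' y.
Proof. by rewrite /ext2 valK. Qed.
Definition vcd2 (vc' : Vq -> nat) (d : nat) (x : V) : nat :=
  if x \in V2 then d else if x \in V1 then ext2 vc' v0 else ext2 vc' x.

Lemma vcd2_val vc' d y : vcd2 vc' d (val y) = vc' y.
Proof.
rewrite /vcd2; have := valP y; rewrite /p3 => /orP[yS|/eqP E].
  by rewrite (negPf (mS2 yS)) (negPf (mS1 yS)) ext2_val.
by rewrite E (negPf (m12 Hv0)) Hv0 -E ext2_val.
Qed.

Lemma Vq_set : val @: [set: Vq] = [set v0] :|: S :|: set0.
Proof.
apply/setP=> x; rewrite !inE orbF; apply/imsetP/idP.
  case=> y _ ->; have := valP y; rewrite /p3 => /orP[->|->] //; by rewrite orbT.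
move=> H; have Px : p3 x by rewrite /p3 orbC.
by exists (Sub x Px); rewrite ?SubK.
Qed.

Lemma gz_lf (A : {set Et gz}) : loopfree A.
Proof. by move=> t _; apply: v0_sv. Qed.

Lemma Z2 vc' (S' : {set V}) : S' \subset S -> S' != S ->
  W (g:=gz) setT (ext2 vc') ([set v0] :|: S') =
  ((if Cf (ext2 vc' v0) then 1 else 0) * W (g:=gM) E1 (vcd2 vc' 0) (V1 :|: S'))%R.
Proof.
move=> sS nS.
have v0S' : v0 \notin S' by apply/negP=> /(subsetP sS)/mS1; rewrite Hv0.
have cS : #|S'| <= 2.
  have := subset_leq_card sS; rewrite HS3 leq_eqVlt ltnS => /orP[/eqP c3|//].
  by move: nS; rewrite (Tfull sS c3) eqxx.
case: (boolP (odd #|S'|)) => oS; last first.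
  rewrite W_odd; last by rewrite cardsU1 v0S' /= oS.
    rewrite W_odd ?mulr0 //; first exact: lfM.
    by rewrite cardV1T // oddD Hodd1 (negPf oS).
  exact: gz_lf.
have c1 : #|S'| = 1 by move: cS oS; case: #|S'| => [|[|[|n]]].
case: (Tsing sS c1) => k ES; subst S'.
rewrite W_pair ?v0_sv //; last exact: gz_lf.
set vc := ext2 vc'.
have key : W (g:=gM) E1 (vcd2 vc' 0) (V1 :|: [set sv k]) = Wz k (vc v0) (vc (sv k)).
  apply: W_loc => x; rewrite !inE => /orP[x1|/eqP->].
    rewrite /vcd2 /colz (negPf (m12 x1)) x1.
    have -> : (x == sv k) = false by apply/negP=> /eqP E; move: (mS1 (sv_S k)); rewrite -E x1.
    by [].
  by rewrite /vcd2 /colz eqxx (negPf (mS2 (sv_S k))) (negPf (mS1 (sv_S k))).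
case: (boolP (Cf (vc v0))) => cf; last first.
  rewrite mul0r big_pred0 // => t; rewrite in_setT /filt /=; apply/negP.
  case/andP=> /andP[/eqP E _] _; move: cf; by rewrite -E (valP t).
rewrite mul1r key.
have h1 : vc v0 < N by case/andP: cf.
case: (boolP (vc (sv k) < N)) => h2; last first.
  rewrite big_pred0; last first.
    move=> t; rewrite in_setT /filt /=; apply/negP.
    case/andP=> /andP[_ /eqP E2'] /eqP E.
    have Ek : (val t).1.1 = k.
      apply: sv_inj; have := congr1 (fun X : {set V} => sv (val t).1.1 \in X) E.
      rewrite /= !inE eqxx orbT => /esym/orP[/eqP E'|/eqP //].
      by move: (v0_sv (val t).1.1); rewrite E' eqxx.
    by move: h2; rewrite -Ek -E2' ltn_ord.
  rewrite -key (@W_big _ _ _ (sv k)) // ?inE ?eqxx ?orbT //.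
  by rewrite /vcd2 (negPf (mS2 (sv_S k))) (negPf (mS1 (sv_S k))) leqNgt.
have cf' : Cf (Ordinal h1) by [].
rewrite (big_pred1 (exist (fun t : 'I_3 * 'I_N * 'I_N => Cf t.1.2) (k, Ordinal h1, Ordinal h2) cf')) //.
move=> t; rewrite in_setT /filt /=; apply/idP/idP.
  case/andP=> /andP[/eqP E1' /eqP E2'] /eqP E.
  have Ek : (val t).1.1 = k.
    apply: sv_inj; have := congr1 (fun X : {set V} => sv (val t).1.1 \in X) E.
    rewrite /= !inE eqxx orbT => /esym/orP[/eqP E'|/eqP //].
    by move: (v0_sv (val t).1.1); rewrite E' eqxx.
  apply/eqP; apply: val_inj => /=; move: E1' E2' Ek; clear E.
  case: t => [[[l al] be] Ht] /= E1' E2' El; subst l; congr (_, _, _); apply: val_inj.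
    exact: E1'.
  exact: E2'.
move/eqP=> -> /=; by rewrite !eqxx.
Qed.

Lemma F2 vc' : vc_weight (ec_of_eg gF2) vc' =
  ((if Cf (ext2 vc' v0) then 1 else 0) * \sum_(d < N) vc_weight M (vcd2 vc' d))%R.
Proof.
rewrite ec_weight (@W_pull V p3 x0q gall2 setT (ext2 vc') vc' setT); last first.
- by move=> y; rewrite ext2_val.
- exact: gall2_p.
rewrite W_sum_zero // W_sum Vq_set W_reduce; first last.
- move=> t z _; rewrite inE => /eqP->; rewrite /touch /=; apply/negP=> /orP[]/eqP E.
    by move: (mS1 (pv_S t.1.1)); rewrite E Hv0.
  by move: (mS1 (qv_S t.1.1)); rewrite E Hv0.
- by move=> i y _; rewrite !inE.
- by move=> x; rewrite !inE.
- by move=> x; rewrite !inE.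
- by move=> x; rewrite inE => /eqP->; apply/negP=> xS; move: (mS1 xS); rewrite Hv0.
set kc := (if Cf (ext2 vc' v0) then 1 else 0)%R.
rewrite (eq_bigr (fun d : 'I_N => \sum_(S' : {set V} | S' \subset S)
   (W (g:=gM) E1 (vcd2 vc' 0) (V1 :|: S') *
             W (g:=gM) E2 (vcd2 vc' d) (V2 :|: (S :\: S'))))%R); last first.
  move=> d _; rewrite MD; apply: eq_bigr => S' sS; congr (_ * _)%R.
  apply: W_loc => x; rewrite !inE => /orP[x1|xS]; rewrite /vcd2.
    by rewrite (negPf (m12 x1)) x1.
  by rewrite (negPf (mS2 (subsetP sS x xS))).
rewrite exchange_big /= mulr_sumr; apply: eq_bigr => S' sS.
rewrite -mulr_sumr set0U.
case: (eqVneq S' S) => ES.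
  subst S'; rewrite setDv setU0.
  rewrite (eq_bigr (fun d : 'I_N => beta d)); last first.
    by move=> d _; apply: W_loc => x x2; rewrite /vcd2 x2.
  rewrite big1 ?mulr0; last by move=> d _; apply: Hb.
  rewrite (@W_star _ _ _ (ext2 vc') _ v0) ?mul0r //.
  - exact: gz_lf.
  - by move=> t _; rewrite /touch eqxx.
  - by rewrite cardsU1 HS3 (negbTE (contra (@mS1 v0) (negbNE (negbT _)))) // ?Hv0.
rewrite Z2 // (@NL (fun _ => 1%R) 1%R (ext2 vc') (vcd2 vc')).
- rewrite mul1r (eq_bigr (fun d : 'I_N => W (g:=gM) E2 (vcd2 vc' d) (V2 :|: (S :\: S')))); last first.
    by move=> d _; rewrite mul1r.
  by rewrite mulrA.
- by move=> d x x2; rewrite /vcd2 x2.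
- by move=> d x xS; rewrite /vcd2 (negPf (mS2 xS)) (negPf (mS1 xS)).
- exact: subsetDl.
- apply/negP=> /eqP E; move/negP: ES; apply; apply/eqP/setP=> x.
  apply/idP/idP; first by apply: (subsetP sS).
  move=> xS; case: (boolP (x \in S')) => // nx.
  have : x \in S :\: S' by rewrite inE nx xS.
  by rewrite E inE.
Qed.

Lemma case2 n : dim_ge M n -> mu_ge [rel u v : Vq | u != v] n.
Proof.
case/dim_cs => cs [Hc Hi].
have e0 : forall vc', ext2 vc' v0 = vc' x0q := fun vc' => ext2_val vc' x0q.
apply: (@finish Vq x0q gF2 Cf n cs) => //.
- move=> i /=; apply/eqP=> E; have := congr1 val E.
  rewrite !insubdK; [exact/eqP/gall2_lf | by case/andP: (gall2_p i) | by case/andP: (gall2_p i)].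
- move=> u v nuv; exists (inr (exist _ (u, v) nuv)); by rewrite /= !valKd.
- move=> vc' mono fe; case: (ec_feasible fe) => P pm.
  have pm2 := pm_pull gall2_p (fun y => esym (ext2_val vc' y)) pm.
  have v0U : v0 \in val @: [set: Vq] by rewrite Vq_set !inE eqxx.
  case: (pm_ex pm2 v0U) => i iP ti; have fi := pm_filt pm2 iP.
  rewrite -e0; move: i iP ti fi; case=> [[t|t]|e] iP ti fi.
  + move: fi; rewrite /filt /= => /andP[/eqP <- _]; exact: (valP t).
  + exfalso; move: ti; rewrite /touch /= => /orP[]/eqP E.
      by move: (mS1 (pv_S t.1.1)); rewrite E Hv0.
    by move: (mS1 (qv_S t.1.1)); rewrite E Hv0.
  + exfalso; move: fi; rewrite /filt /= !ext2_val (mono (val e).2 (val e).1).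
    by case/andP=> /eqP <-.
- move=> vc' mono cf; rewrite F2 e0 cf mul1r.
  set cc := vc' x0q.
  have ccN : cc < N by case/andP: cf.
  have -> : (\sum_(d < N) vc_weight M (vcd2 vc' d) =
     \sum_(d < N) (fun _ => 1%R) (d : nat) * (fun d => vc_weight M (vcd2 vc' d)) (d : nat))%R.
    by apply: eq_bigr => d _; rewrite mul1r.
  rewrite (@sum_single (fun _ => 1%R) (fun d => vc_weight M (vcd2 vc' d)) cc ccN) //.
  + apply: (@HG1 cc _ cf) => x; rewrite /vcd2; case: (boolP (x \in V2)) => n2 //.
    case: (boolP (x \in V1)) => n1; first by rewrite e0.
    have Px : p3 x by rewrite /p3 (mall n1 n2).
    by rewrite -[x]/(val (exist p3 x Px)) ext2_val; apply: mono.
  + move=> d nd; apply: HG0 => mm; move/eqP: nd; apply.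
    by rewrite /cc -(vcd2_val vc' d x0q) -(mm y2 (val x0q)) /vcd2 Hy2.
- move=> vc' nm; rewrite F2; case: ifP => _; last by rewrite !mul0r.
  rewrite big1 ?mulr0 // => d _; rewrite HG0 //.
  exact: (nonmono_ext (h := val) (vcd2_val vc' d) nm).
Qed.

End Case2.

End Main.
Lemma mu_ge_le (V : finType) (g : rel V) m n : m <= n -> mu_ge g n -> mu_ge g m.
Proof.
move=> le [M [H1 H2 H3 [f [Hf Hd]]]]; exists M; split => //.
exists (fun k => f (widen_ord le k)); split; first by move=> k; apply: Hf.
move=> k l nkl; apply: Hd; apply/eqP=> E; move/eqP: nkl; apply.
by apply: val_inj; have := congr1 val E.
Qed.

Lemma simple_neq (V : finType) : simple_graph [rel u v : V | u != v].
Proof. by split => [u v|v] /=; rewrite ?eqxx // eq_sym. Qed.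

Theorem theorem7 (V : finType) (G : mgraph V) (S V1 V2 : {set V}) :
  mloopless G ->
  #|S| = 3 ->
  vertex_cut (mskeleton G) S ->
  V1 :|: V2 = ~: S ->
  V1 :&: V2 = set0 ->
  V1 != set0 -> V2 != set0 ->
  (forall u v, u \in V1 -> v \in V2 -> ~~ mskeleton G u v) ->
  odd #|V1| -> ~~ odd #|V2| ->
  exists (V' : finType) (G' : rel V'),
    [/\ simple_graph G',
        #|V'| <= #|V1| + 3,
        #|V1| + 3 <= #|V| - 2
      & mu_le (mskeleton G) G'].
Proof.
move=> _ HS3 _ Hpart Hdisj nV1 nV2 Hno Hodd Heven.
case/set0Pn: nV1 => v0 Hv0; case/set0Pn: (nV2) => y2 Hy2.
have [a [b [c [HSabc [Hab [Hac Hbc]]]]]] :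
    exists a b c, S = [set a; b; c] /\ a != b /\ a != c /\ b != c.
  have : size (enum S) = 3 by rewrite -cardE.
  have := enum_uniq (pred_of_set S); have := mem_enum (pred_of_set S).
  case: (enum S) => [|a [|b [|c [|z s]]]] //= Hm.
  move=> U _; move: U; rewrite /= !inE !negb_or => /andP[/andP[Hab Hac] /andP[Hbc _]].
  exists a, b, c; split => //.
  by apply/setP=> x; rewrite -Hm !inE orbA.
have HV : #|V| = #|V1| + #|V2| + 3.
  have E := congr1 (fun X : {set V} => #|X|) Hpart; rewrite /= cardsU Hdisj cards0 subn0 in E.
  by rewrite -(cardsC S) -E HS3 addnC.
have H2 : 2 <= #|V2|.
  move: Heven; have := nV2; rewrite -card_gt0; case: #|V2| => [|[|n]] //.
have c1 : 0 < #|V1| by rewrite card_gt0; apply/set0Pn; exists v0.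
pose K1 := [rel u v : Vp V2 | u != v].
pose K2 := [rel u v : Vq S v0 | u != v].
have cK1 : #|[pred x | p2 V2 x]| <= #|V1| + 3.
  have := cardsC V2; rewrite HV.
  have -> : #|[pred x | p2 V2 x]| = #|~: V2| by apply: eq_card => x; rewrite !inE.
  move=> E; lia.
have cK2 : #|[pred x | p3 S v0 x]| <= #|V1| + 3.
  have -> : #|[pred x | p3 S v0 x]| = #|v0 |: S| by apply: eq_card => x; rewrite !inE /p3 orbC.
  rewrite cardsU1 HS3.
  have -> : v0 \notin S.
    apply/negP=> v0S; have := congr1 (fun X : {set V} => v0 \in X) Hpart.
    by rewrite /= !inE Hv0 v0S.
  lia.
have size2 : #|V1| + 3 <= #|V| - 2 by rewrite HV; lia.
have main : forall n, mu_ge (mskeleton G) n -> mu_ge K1 n \/ mu_ge K2 n.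
  move=> n [M [Hl Hsk HG Hd]].
  have HnoE : forall i : 'I_(nE M), src M i \in V1 -> dst M i \notin V2.
    move=> i s1; apply/negP=> d2; move: (Hno _ _ s1 d2); rewrite -Hsk.
    by case/negP; apply/existsP; exists i; rewrite !eqxx.
  have HnoE' : forall i : 'I_(nE M), src M i \in V2 -> dst M i \notin V1.
    move=> i s2; apply/negP=> d1; move: (Hno _ _ d1 s2); rewrite -Hsk.
    by case/negP; apply/existsP; exists i; rewrite !eqxx orbT.
  case: (boolP [exists d : 'I_(N M), beta M V2 d != 0%R]) => [/existsP[d0 Hb0]|Hb].
    left; exact: (case1 Hl HnoE HnoE' Hpart Hdisj Hv0 Hy2 Heven HSabc Hab Hac Hbc HG Hb0 Hd).
  right; apply: (case2 Hl HnoE HnoE' Hpart Hdisj Hv0 Hy2 Hodd Heven HSabc Hab Hac Hbc HG _ Hd).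
  by move=> d; apply/eqP; move/existsPn: Hb => /(_ d); rewrite negbK.
case: (classic (mu_le (mskeleton G) K1)) => H.
  by exists (Vp V2), K1; split => //; [apply: simple_neq | rewrite card_sig].
exists (Vq S v0), K2; split => //; [exact: simple_neq | by rewrite card_sig |].
have [n0 [Hn0 Hn0']] : exists n0, mu_ge (mskeleton G) n0 /\ ~ mu_ge K1 n0.
  apply: NNPP => nE; apply: H => n Hn; apply: NNPP => nK; apply: nE; by exists n.
move=> n Hn; case: (main n Hn) => // h1.
case: (leqP n0 n) => le.
  by exfalso; apply: Hn0'; apply: mu_ge_le le h1.
case: (main n0 Hn0) => // h2.
apply: mu_ge_le h2; exact: ltnW.
Qed.
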